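(* For all $n\ge0$, $\ell\ge1$ and every $\varphi\in\mathcal{B}\Sigma_{n,\ell}$, there exists a formula $\varphi'\in\mathrm{FOC}(\{\mathsf{P}_\exists\})$ equivalent to $\varphi$ such that $\mathrm{free}(\varphi')=\mathrm{free}(\varphi)$, $\mathrm{bw}(\varphi')\le\ell$ and $\mathrm{br}(\varphi')\le n$.
   Context: $\mathcal{B}\Sigma_{0,\ell}$ is the set of quantifier-free first-order formulas; a formula belongs to $\mathcal{B}\Sigma_{n+1,\ell}$ if it is a Boolean combination of formulas $\exists x_1\cdots\exists x_k\,\psi$ with $k\le\ell$ and $\psi\in\mathcal{B}\Sigma_{n,\ell}$. $\mathsf{P}_\exists$ is a unary numerical predicate with semantics $\{1,2,3,\dots\}$. The logic $\mathrm{FOC}(\{\mathsf{P}_\exists\})$ consists of formulas and counting terms built by: atomic first-order formulas; $\neg$, $\vee$; $\exists y$ for (structure) variables $y$; $\mathsf{P}_\exists(t)$ for a counting term $t$, true iff the value of $t$ is $\ge1$; counting terms $\#\bar y.\varphi$ for a tuple $\bar y$ of $\ge1$ pairwise distinct variables, with value the number of tuples of elements satisfying $\varphi$ for $\bar y$; integers; $(t_1+t_2)$, $(t_1\cdot t_2)$. Two formulas are equivalent if they agree in all (finite) structures under all assignments. $\mathrm{br}$ is the maximal nesting depth of constructs $\exists y$ and $\#\bar y$; $\mathrm{bw}$ is the maximal $|\bar y|$ over counting terms $\#\bar y.\psi$ occurring, and if none occurs, $1$ if some $\exists y$ occurs and $0$ otherwise. *)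

(* Defs.v *)
From mathcomp Require Import all_boot all_order all_algebra.
Set Implicit Arguments. Unset Strict Implicit. Unset Printing Implicit Defensive.

Local Open Scope ring_scope.

Section Logic.
Variables (Sym : Type) (ar : Sym -> nat).

Definition var := nat.

Inductive fo : Type :=
| FEq  : var -> var -> fo
| FRel : forall s : Sym, (ar s).-tuple var -> fo
| FNot : fo -> fo
| FOr  : fo -> fo -> fo
| FEx  : var -> fo -> fo.

Fixpoint qfree (f : fo) : bool :=
  match f with
  | FEq _ _ | FRel _ _ => true
  | FNot g => qfree g
  | FOr g h => qfree g && qfree h
  | FEx _ _ => false
  end.

Definition exs (xs : seq var) (psi : fo) : fo := foldr FEx psi xs.

Inductive BSigma (l : nat) : nat -> fo -> Prop :=
| BS0 f : qfree f -> BSigma l 0 f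
| BSex n (xs : seq var) psi :
    (size xs <= l)%N -> BSigma l n psi -> BSigma l n.+1 (exs xs psi)
| BSnot n f : BSigma l n.+1 f -> BSigma l n.+1 (FNot f)
| BSor n f g : BSigma l n.+1 f -> BSigma l n.+1 g -> BSigma l n.+1 (FOr f g).

Inductive foc : Type :=
| CEq  : var -> var -> foc
| CRel : forall s : Sym, (ar s).-tuple var -> foc
| CNot : foc -> foc
| COr  : foc -> foc -> foc
| CEx  : var -> foc -> foc
| CPex : cterm -> foc
with cterm : Type :=
| TCount : seq var -> foc -> cterm
| TInt   : int -> cterm
| TAdd   : cterm -> cterm -> cterm
| TMul   : cterm -> cterm -> cterm.

Fixpoint wf_foc (f : foc) : bool :=
  match f with
  | CEq _ _ | CRel _ _ => true
  | CNot g => wf_foc g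
  | COr g h => wf_foc g && wf_foc h
  | CEx _ g => wf_foc g
  | CPex t => wf_ct t
  end
with wf_ct (t : cterm) : bool :=
  match t with
  | TCount ys g => [&& (0 < size ys)%N, uniq ys & wf_foc g]
  | TInt _ => true
  | TAdd t1 t2 | TMul t1 t2 => wf_ct t1 && wf_ct t2
  end.

Fixpoint free_fo (f : fo) : seq var :=
  match f with
  | FEq x y => [:: x; y]
  | FRel _ vs => tval vs
  | FNot g => free_fo g
  | FOr g h => free_fo g ++ free_fo h
  | FEx x g => [seq v <- free_fo g | v != x]
  end.

Fixpoint free_foc (f : foc) : seq var :=
  match f with
  | CEq x y => [:: x; y]
  | CRel _ vs => tval vs
  | CNot g => free_foc g
  | COr g h => free_foc g ++ free_foc h
  | CEx x g => [seq v <- free_foc g | v != x]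
  | CPex t => free_ct t
  end
with free_ct (t : cterm) : seq var :=
  match t with
  | TCount ys g => [seq v <- free_foc g | v \notin ys]
  | TInt _ => [::]
  | TAdd t1 t2 | TMul t1 t2 => free_ct t1 ++ free_ct t2
  end.

Fixpoint br (f : foc) : nat :=
  match f with
  | CEq _ _ | CRel _ _ => 0
  | CNot g => br g
  | COr g h => maxn (br g) (br h)
  | CEx _ g => (br g).+1
  | CPex t => br_ct t
  end
with br_ct (t : cterm) : nat :=
  match t with
  | TCount _ g => (br g).+1
  | TInt _ => 0
  | TAdd t1 t2 | TMul t1 t2 => maxn (br_ct t1) (br_ct t2)
  end.

Fixpoint hascount (f : foc) : bool :=
  match f with
  | CEq _ _ | CRel _ _ => false
  | CNot g => hascount g
  | COr g h => hascount g || hascount h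
  | CEx _ g => hascount g
  | CPex t => hascount_ct t
  end
with hascount_ct (t : cterm) : bool :=
  match t with
  | TCount _ _ => true
  | TInt _ => false
  | TAdd t1 t2 | TMul t1 t2 => hascount_ct t1 || hascount_ct t2
  end.

Fixpoint hasex (f : foc) : bool :=
  match f with
  | CEq _ _ | CRel _ _ => false
  | CNot g => hasex g
  | COr g h => hasex g || hasex h
  | CEx _ _ => true
  | CPex t => hasex_ct t
  end
with hasex_ct (t : cterm) : bool :=
  match t with
  | TCount _ g => hasex g
  | TInt _ => false
  | TAdd t1 t2 | TMul t1 t2 => hasex_ct t1 || hasex_ct t2
  end.

Fixpoint maxcw (f : foc) : nat :=
  match f with
  | CEq _ _ | CRel _ _ => 0
  | CNot g => maxcw g
  | COr g h => maxn (maxcw g) (maxcw h)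
  | CEx _ g => maxcw g
  | CPex t => maxcw_ct t
  end
with maxcw_ct (t : cterm) : nat :=
  match t with
  | TCount ys g => maxn (size ys) (maxcw g)
  | TInt _ => 0
  | TAdd t1 t2 | TMul t1 t2 => maxn (maxcw_ct t1) (maxcw_ct t2)
  end.

Definition bw (f : foc) : nat :=
  if hascount f then maxcw f else if hasex f then 1%N else 0%N.

Record structure := Structure {
  carrier :> finType;
  interp : forall s : Sym, (ar s).-tuple carrier -> bool
}.

Section Semantics.
Variable M : structure.

Definition upd (a : var -> M) (x : var) (m : M) : var -> M :=
  fun v => if v == x then m else a v.

Fixpoint updl (a : var -> M) (ys : seq var) (ms : seq M) : var -> M :=
  match ys, ms with
  | y :: ys', m :: ms' => upd (updl a ys' ms') y m
  | _, _ => a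
  end.

Fixpoint sat_fo (a : var -> M) (f : fo) : bool :=
  match f with
  | FEq x y => a x == a y
  | FRel s vs => interp (map_tuple a vs)
  | FNot g => ~~ sat_fo a g
  | FOr g h => sat_fo a g || sat_fo a h
  | FEx x g => [exists m : M, sat_fo (upd a x m) g]
  end.

Fixpoint sat_foc (a : var -> M) (f : foc) : bool :=
  match f with
  | CEq x y => a x == a y
  | CRel s vs => interp (map_tuple a vs)
  | CNot g => ~~ sat_foc a g
  | COr g h => sat_foc a g || sat_foc a h
  | CEx x g => [exists m : M, sat_foc (upd a x m) g]
  | CPex t => (1 <= eval_ct a t)%R
  end
with eval_ct (a : var -> M) (t : cterm) : int :=
  match t with
  | TCount ys g =>
      (#|[pred ms : (size ys).-tuple M | sat_foc (updl a ys ms) g]|)%:Z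
  | TInt z => z
  | TAdd t1 t2 => eval_ct a t1 + eval_ct a t2
  | TMul t1 t2 => eval_ct a t1 * eval_ct a t2
  end.

End Semantics.

End Logic.

(* Main.v *)
Require Import Defs.
From mathcomp Require Import all_boot all_order all_algebra.
Set Implicit Arguments. Unset Strict Implicit. Unset Printing Implicit Defensive.

Section Proof.
Variables (Sym : Type) (ar : Sym -> nat).

Lemma sat_fo_ext (M : structure ar) (f : fo ar) : forall (a b : var -> M),
  (forall v, a v = b v) -> sat_fo a f = sat_fo b f.
Proof.
elim: f => [x y|s vs|g IH|g IHg h IHh|x g IH] a b E /=.
- by rewrite !E.
- congr (interp _); apply: val_inj => /=; apply: eq_map => v; exact: E.
- by rewrite (IH a b E).
- by rewrite (IHg a b E) (IHh a b E).
- apply: eq_existsb => m; apply: IH => v; rewrite /upd; case: ifP => //.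
Qed.

Lemma sat_exs (M : structure ar) (xs : seq var) (psi : fo ar) : forall (a : var -> M),
  sat_fo a (exs xs psi) <->
  exists b : var -> M, (forall v, v \notin xs -> b v = a v) /\ sat_fo b psi.
Proof.
elim: xs => [|x xs IH] a /=.
- split; first by move=> H; exists a.
  move=> [b [Hb Hs]]; by rewrite (@sat_fo_ext M psi a b (fun v => esym (Hb v (negbT (in_nil v))))).
- split.
  + move=> /existsP [m /IH [b [Hb Hs]]]; exists b; split=> // v.
    rewrite in_cons negb_or => /andP [Hx Hv]; rewrite Hb // /upd (negbTE Hx) //.
  + move=> [b [Hb Hs]]; apply/existsP; exists (b x); apply/IH; exists b; split=> // v Hv.
    rewrite /upd; case: eqP => [->|/eqP Hx] //; apply: Hb.
    by rewrite in_cons negb_or Hx.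
Qed.

Lemma updl_notin (M : structure ar) (a : var -> M) ys ms v :
  v \notin ys -> updl a ys ms v = a v.
Proof.
elim: ys ms => [|y ys IH] [|m ms] //=.
rewrite in_cons negb_or => /andP [Hy Hv]; rewrite /upd (negbTE Hy); exact: IH.
Qed.

Lemma sat_updl (M : structure ar) (ys : seq var) (P : (var -> M) -> Prop) :
  (forall a b, (forall v, a v = b v) -> P a -> P b) ->
  forall a : var -> M,
  (exists ms : seq M, size ms = size ys /\ P (updl a ys ms)) <->
  exists b : var -> M, (forall v, v \notin ys -> b v = a v) /\ P b.
Proof.
move=> Pext; elim: ys P Pext => [|y ys IH] P Pext a.
- split; first by move=> [ms [_ H]]; exists a; case: ms H.
  move=> [b [Hb Hs]]; exists [::]; split=> //=; apply: Pext Hs => v; exact: Hb.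
- split.
  + move=> [ms0 [Hs0 HP]]; case: ms0 Hs0 HP => [|m ms] // _ HP; exists (upd (updl a ys ms) y m); split=> // v.
    rewrite in_cons negb_or => /andP [Hy Hv]; rewrite /upd (negbTE Hy).
    exact: updl_notin.
  + move=> [b [Hb HP]].
    have Pext' : forall a0 b0 : var -> M, (forall v, a0 v = b0 v) ->
        P (upd a0 y (b y)) -> P (upd b0 y (b y)).
      move=> a0 b0 E; apply: Pext => v; rewrite /upd; case: ifP => //.
    have [ms [Hs HP']] : exists ms : seq M, size ms = size ys /\
        P (upd (updl a ys ms) y (b y)).
      apply/(IH (fun c => P (upd c y (b y))) Pext' a).
      exists (upd b y (a y)); split.
      * move=> v Hv; rewrite /upd; case: eqP => [->|/eqP Hy] //; apply: Hb.
        by rewrite in_cons negb_or Hy.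
      * apply: Pext HP => v; rewrite /upd; case: eqP => [->|] //.
    by exists (b y :: ms); split => //=; rewrite Hs.
Qed.

Fixpoint tr (f : fo ar) : foc ar :=
  match f with
  | FEq x y => @CEq Sym ar x y
  | FRel s vs => @CRel Sym ar s vs
  | FNot g => CNot (tr g)
  | FOr g h => COr (tr g) (tr h)
  | FEx _ _ => @CEq Sym ar 0 0
  end.

Definition Good (n l : nat) (phi : fo ar) (phi' : foc ar) :=
    wf_foc phi' /\
    (forall (M : structure ar) (a : var -> M), sat_foc a phi' = sat_fo a phi) /\
    free_foc phi' =i free_fo phi /\
    (maxcw phi' <= l)%N /\ hasex phi' = false /\ (br phi' <= n)%N.

Lemma tr_good l f : qfree f -> Good 0 l f (tr f).
Proof.
rewrite /Good; elim: f => [x y|s vs|g IH|g IHg h IHh|x g IH] Hq /=; last by [].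
- by do 5 (split => //).
- by do 5 (split => //).
- have [w [s [fr [m [he b]]]]] := IH Hq.
  split => //; split; first by move=> M a; rewrite /= s.
  by do 3 (split => //).
- move/andP: Hq => [Hg Hh].
  have [w [s [fr [m [he b]]]]] := IHg Hg.
  have [w' [s' [fr' [m' [he' b']]]]] := IHh Hh.
  repeat split => /=; first by rewrite w w'.
  + by move=> M a; rewrite s s'.
  + by move=> v; rewrite !mem_cat fr fr'.
  + by rewrite geq_max m m'.
  + by rewrite he he'.
  + by rewrite geq_max b b'.
Qed.

Lemma free_exs xs (psi : fo ar) v :
  (v \in free_fo (exs xs psi)) = (v \in free_fo psi) && (v \notin xs).
Proof.
elim: xs => [|x xs IH] /=; first by rewrite andbT.
by rewrite mem_filter IH in_cons negb_or andbCA andbA.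
Qed.

Lemma good_all l n phi : BSigma l n phi -> exists phi', Good n l phi phi'.
Proof.
elim => {n phi}; rewrite /Good.
- move=> f Hq; exists (tr f); exact: tr_good.
- move=> n xs psi Hsz _ [p [w [s [fr [m [he b]]]]]].
  case: xs Hsz => [|x xs'] Hsz.
  + exists p; repeat split => //; exact: leqW.
  + have Hne : (0 < size (undup (x :: xs')))%N.
      by case: (undup (x :: xs')) (mem_undup (x :: xs') x) => //; rewrite mem_head.
    have Hu := undup_uniq (x :: xs').
    have Hmem := mem_undup (x :: xs').
    have Hsize := size_undup (x :: xs').
    move: (x :: xs') (undup (x :: xs')) Hsz Hne Hu Hmem Hsize => xs ys Hsz Hne Hu Hmem Hsize.
    exists (CPex (TCount ys p)); repeat split => /=.
    * by rewrite Hne Hu w.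
    * move=> M a; apply/idP/idP.
      - rewrite lez_nat => /card_gt0P [ms]; rewrite inE s => Hs.
        apply/sat_exs.
        have Pext : forall a0 b0 : var -> M, (forall v, a0 v = b0 v) ->
            sat_fo a0 psi -> sat_fo b0 psi.
          by move=> a0 b0 E; rewrite (sat_fo_ext _ E).
        have [bb [Hb Hbs]] := (proj1 (@sat_updl M ys _ Pext a)) (ex_intro _ (tval ms) (conj (size_tuple ms) Hs)).
        by exists bb; split => // v Hv; apply: Hb; rewrite Hmem.
      - move/sat_exs => [bb [Hb Hbs]].
        have Pext : forall a0 b0 : var -> M, (forall v, a0 v = b0 v) ->
            sat_fo a0 psi -> sat_fo b0 psi.
          by move=> a0 b0 E; rewrite (sat_fo_ext _ E).
        have Hb' : forall v, v \notin ys -> bb v = a v.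
          by move=> v Hv; apply: Hb; rewrite -Hmem.
        have [ms [Hms HP]] := (proj2 (@sat_updl M ys _ Pext a)) (ex_intro _ bb (conj Hb' Hbs)).
        rewrite lez_nat; apply/card_gt0P; exists (Tuple (introT eqP Hms)).
        by rewrite inE s.
    * by move=> v; rewrite mem_filter free_exs Hmem fr andbC.
    * by rewrite geq_max m (leq_trans Hsize Hsz).
    * exact: he.
    * exact: b.
- move=> n f _ [p [w [s [fr [m [he b]]]]]].
  exists (CNot p); repeat split => //=; by move=> M a; rewrite s.
- move=> n f g _ [p [w [s [fr [m [he b]]]]]] _ [p' [w' [s' [fr' [m' [he' b']]]]]].
  exists (COr p p'); repeat split => /=; first by rewrite w w'.
  + by move=> M a; rewrite s s'.
  + by move=> v; rewrite !mem_cat fr fr'.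
  + by rewrite geq_max m m'.
  + by rewrite he he'.
  + by rewrite geq_max b b'.
Qed.

End Proof.

Theorem lemma5p5 (Sym : Type) (ar : Sym -> nat) (n l : nat) (phi : fo ar) :
  (1 <= l)%N -> BSigma l n phi ->
  exists phi' : foc ar,
    wf_foc phi' /\
    (forall (M : structure ar) (a : var -> M), sat_foc a phi' = sat_fo a phi) /\
    free_foc phi' =i free_fo phi /\
    (bw phi' <= l)%N /\ (br phi' <= n)%N.
Proof.
move=> Hl /good_all [p [w [s [fr [m [he b]]]]]].
exists p; repeat split => //.
by rewrite /bw he; case: ifP => // _; rewrite if_same.
Qed.
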